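(* Let $K$ be a field with pairwise commuting derivations $\frac{d}{dx_1},\dots,\frac{d}{dx_k}$ and field of constants $C$. Give $K(\partial_1,\dots,\partial_k)$ the language $\{0,1,+,\cdot,\partial_1,\dots,\partial_k\}$ and $C(t_1,\dots,t_k)$ the language $\{0,1,+,\cdot,t_1,\dots,t_k\}$. Then the $C$-algebra homomorphism $\phi:C(t_1,\dots,t_k)\to K(\partial_1,\dots,\partial_k)$ with $\phi(t_i)=\partial_i$ is an effective Diophantine map.
   Context: The field of constants is $C=\{f\in K\mid \frac{d}{dx_1}f=\dots=\frac{d}{dx_k}f=0\}$. $K[\partial_1,\dots,\partial_k]$ is the ring of differential polynomials with usual addition and multiplication determined by $\partial_i\partial_j=\partial_j\partial_i$ and $\partial_ia=a\partial_i+\frac{d}{dx_i}(a)$ for $a\in K$; it satisfies the left Ore condition and $K(\partial_1,\dots,\partial_k)$ denotes its left division ring of fractions. For a set $R$ with language $\mathcal{L}$ (constants, functions, relations incl. $0$ and $=$), $S\subset R^m$ is Diophantine if $S=\{\vec x\mid\exists\vec y\ (f_1\wedge\dots\wedge f_r)\}$ with basic formulas $f_i$ of the form $(t_1,\dots,t_l)\in S'$, $S'$ a relation or equality and $t_j$ terms of $\mathcal{L}$. A map $d:R_1\to R_2$ is Diophantine if coordinatewise images of Diophantine sets are Diophantine; it is effective if a Diophantine definition of $d(S)$ can be algorithmically computed from one of $S$. *)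

(* Defs.v *)
From HB Require Import structures.
From mathcomp Require Import all_boot all_order all_algebra.
From mathcomp Require Import fraction.
From mathcomp Require Import mpoly.

Set Implicit Arguments.
Unset Strict Implicit.
Unset Printing Implicit Defensive.

Import GRing.Theory.
Local Open Scope ring_scope.

Definition commuting_derivations (K : fieldType) (k : nat) (d : 'I_k -> K -> K) :=
  [/\ forall i x y, d i (x + y) = d i x + d i y,
      forall i x y, d i (x * y) = d i x * y + x * d i y
    & forall i j x, d i (d j x) = d j (d i x)].

(* A differential polynomial sum_alpha a_alpha d^alpha is encoded by the *)
(* K-polynomial with coefficients a_alpha ; dpol_eval gives its value in *)
(* D (coefficients written on the left).                               *)

Definition dpol_eval (K : fieldType) (D : unitRingType) (k : nat)
  (iota : K -> D) (dd : 'I_k -> D) (p : {mpoly K[k]}) : D :=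
  \sum_(m <- msupp p) iota (p@_m) * \prod_(i < k) dd i ^+ m i.

(* D, together with iota : K -> D and dd_1..dd_k, is (a copy of) the left
   division ring of fractions K(d_1,...,d_k) of K[d_1,...,d_k]:
   - D is a division ring, iota a ring morphism;
   - the dd_i commute and dd_i * a = a * dd_i + (d/dx_i)(a);
   - the monomials dd^alpha are left K-linearly independent (so the subring
     { dpol_eval p } is the ring K[d_1..d_k] of differential polynomials);
   - every element of D is a left fraction q^-1 * p of differential polynomials
     (classical left ring of quotients). *)
Definition left_Ore_diff_fractions (K : fieldType) (k : nat) (d : 'I_k -> K -> K)
  (D : unitRingType) (iota : {rmorphism K -> D}) (dd : 'I_k -> D) :=
  [/\ forall x : D, x != 0 -> x \is a GRing.unit,
      forall i j, dd i * dd j = dd j * dd i,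
      forall i a, dd i * iota a = iota a * dd i + iota (d i a),
      forall p : {mpoly K[k]}, dpol_eval iota dd p = 0 -> p = 0
    & forall z : D, exists p q : {mpoly K[k]},
        q != 0 /\ z = (dpol_eval iota dd q)^-1 * dpol_eval iota dd p].

Inductive term (k : nat) : Type :=
| TVar of nat
| TZero
| TOne
| TCst of 'I_k
| TAdd of term k & term k
| TMul of term k & term k.

Section TermCount.
Variable k : nat.

Fixpoint term_enc (t : term k) : GenTree.tree (nat + 'I_k) :=
  match t with
  | TVar n => GenTree.Leaf (inl n)
  | TZero => GenTree.Node 0 [::]
  | TOne => GenTree.Node 1 [::]
  | TCst i => GenTree.Leaf (inr i)
  | TAdd a b => GenTree.Node 2 [:: term_enc a; term_enc b]
  | TMul a b => GenTree.Node 3 [:: term_enc a; term_enc b]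
  end.

Fixpoint term_dec (t : GenTree.tree (nat + 'I_k)) : option (term k) :=
  match t with
  | GenTree.Leaf (inl n) => Some (TVar k n)
  | GenTree.Leaf (inr i) => Some (TCst i)
  | GenTree.Node 0 [::] => Some (TZero k)
  | GenTree.Node 1 [::] => Some (TOne k)
  | GenTree.Node 2 [:: a; b] =>
      match term_dec a, term_dec b with
      | Some a', Some b' => Some (TAdd a' b')
      | _, _ => None
      end
  | GenTree.Node 3 [:: a; b] =>
      match term_dec a, term_dec b with
      | Some a', Some b' => Some (TMul a' b')
      | _, _ => None
      end
  | _ => None
  end.

Lemma term_encK : pcancel term_enc term_dec.
Proof. by elim=> //= [a -> b ->|a -> b ->]. Qed.

HB.instance Definition _ := Countable.copy (term k) (pcan_type term_encK).

End TermCount.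

Fixpoint teval (R : nzRingType) (k : nat) (c : 'I_k -> R) (env : nat -> R)
  (t : term k) : R :=
  match t with
  | TVar n => env n
  | TZero => 0
  | TOne => 1
  | TCst i => c i
  | TAdd a b => teval c env a + teval c env b
  | TMul a b => teval c env a * teval c env b
  end.

(* A Diophantine definition (for subsets of R^m) is a finite list of
   equations t = t'; variables 0..m-1 are the free variables x_0..x_{m-1},
   all other variables are existentially quantified. *)
Definition dioph_def (k : nat) := seq (term k * term k).

Definition dioph_sat (R : nzRingType) (k : nat) (c : 'I_k -> R) (m : nat)
  (E : dioph_def k) (x : 'I_m -> R) : Prop :=
  exists y : nat -> R,
    let env := fun j : nat =>
      match @insub nat (fun j => j < m)%N 'I_m j with
      | Some i => x i
      | None => y j
      end in
    forall e, e \in E -> teval c env e.1 = teval c env e.2.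

Definition is_diophantine (R : nzRingType) (k : nat) (c : 'I_k -> R) (m : nat)
  (S : ('I_m -> R) -> Prop) : Prop :=
  exists E : dioph_def k, forall x, S x <-> dioph_sat c E x.

Definition cw_image (R1 R2 : Type) (f : R1 -> R2) (m : nat)
  (S : ('I_m -> R1) -> Prop) : ('I_m -> R2) -> Prop :=
  fun z => exists x, S x /\ forall i, z i = f (x i).

Definition diophantine_map (R1 R2 : nzRingType) (k1 k2 : nat)
  (c1 : 'I_k1 -> R1) (c2 : 'I_k2 -> R2) (f : R1 -> R2) : Prop :=
  forall m (S : ('I_m -> R1) -> Prop),
    is_diophantine c1 S -> is_diophantine c2 (cw_image f S).

Inductive prcode : Type :=
| PZero
| PSucc
| PProj of nat
| PComp of prcode & seq prcode
| PRec of prcode & prcode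
| PMin of prcode.

Inductive preval : prcode -> seq nat -> nat -> Prop :=
| ev_zero v : preval PZero v 0
| ev_succ x v : preval PSucc (x :: v) x.+1
| ev_proj i v : preval (PProj i) v (nth 0%N v i)
| ev_comp f gs v ys z :
    prevals gs v ys -> preval f ys z -> preval (PComp f gs) v z
| ev_rec0 f g v z : preval f v z -> preval (PRec f g) (0%N :: v) z
| ev_recS f g n v z w :
    preval (PRec f g) (n :: v) z -> preval g (n :: z :: v) w ->
    preval (PRec f g) (n.+1 :: v) w
| ev_min f v n :
    preval f (n :: v) 0%N ->
    (forall j, (j < n)%N -> exists z, (0 < z)%N /\ preval f (j :: v) z) ->
    preval (PMin f) v n
with prevals : seq prcode -> seq nat -> seq nat -> Prop :=
| evs_nil v : prevals [::] v [::]
| evs_cons g gs v y ys :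
    preval g v y -> prevals gs v ys -> prevals (g :: gs) v (y :: ys).

(* The map f is effective: there is an algorithm (a mu-recursive function,
   acting on the standard countable encodings [pickle]) computing, from
   (m, E) with E a Diophantine definition of S in R1^m, a Diophantine
   definition of the coordinatewise image f(S) in R2^m. *)
Definition effective_map (R1 R2 : nzRingType) (k1 k2 : nat)
  (c1 : 'I_k1 -> R1) (c2 : 'I_k2 -> R2) (f : R1 -> R2) : Prop :=
  exists e : prcode, forall (m : nat) (E : dioph_def k1),
    exists E' : dioph_def k2,
      preval e [:: pickle (m, E)] (pickle E') /\
      forall z : 'I_m -> R2,
        cw_image f (dioph_sat c1 (m:=m) E) z <-> dioph_sat c2 E' z.

Notation "x %:F" := (@FracField.tofrac _ x) : ring_scope.

(* Main.v *)
Require Import Defs.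
From HB Require Import structures.
From mathcomp Require Import all_boot all_order all_algebra.
From mathcomp Require Import fraction.
From mathcomp Require Import mpoly.

Module SubA.

Set Implicit Arguments.
Unset Strict Implicit.
Unset Printing Implicit Defensive.
Import GRing.Theory.
Local Open Scope ring_scope.

Section PartA.
Variables (k : nat) (K : fieldType) (d : 'I_k -> K -> K).
Hypothesis Hd : commuting_derivations d.
Variables (D : unitRingType) (iota : {rmorphism K -> D}) (dd : 'I_k -> D).
Hypothesis HD : left_Ore_diff_fractions d iota dd.

Definition Mon (m : 'X_{1..k}) : D := \prod_(i < k) dd i ^+ m i.
Local Notation P := (dpol_eval iota dd).

Lemma d0 i : d i 0 = 0.
Proof.
case: Hd => Ha _ _; have := Ha i 0 0; rewrite addr0 => h.
by apply: (@addrI _ (d i 0)); rewrite -h addr0.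
Qed.

Lemma d1 i : d i 1 = 0.
Proof.
case: Hd => _ Hm _; have := Hm i 1 1; rewrite !mul1r mulr1 => h.
by apply: (@addrI _ (d i 1)); rewrite -h addr0.
Qed.

Lemma dpolE (p : {mpoly K[k]}) (s : seq 'X_{1..k}) : uniq s ->
  {subset msupp p <= s} -> P p = \sum_(m <- s) iota p@_m * Mon m.
Proof.
move=> us sub; rewrite /dpol_eval /Mon.
rewrite [RHS](bigID (fun m => m \in msupp p)) /= [X in _ + X]big1 ?addr0; last first.
  by move=> m; rewrite mcoeff_msupp negbK => /eqP ->; rewrite rmorph0 mul0r.
symmetry; rewrite -big_filter; apply: perm_big; apply: uniq_perm.
- exact: filter_uniq.
- exact: msupp_uniq.
by move=> m; rewrite mem_filter; case: (boolP (m \in msupp p)) => // /sub ->.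
Qed.

Definition dmap i (p : {mpoly K[k]}) : {mpoly K[k]} :=
  \sum_(m <- msupp p) d i p@_m *: 'X_[m].

Lemma mcoeff_sumX (s : seq 'X_{1..k}) (f : 'X_{1..k} -> K) m : uniq s ->
  (\sum_(m' <- s) f m' *: 'X_[m'] : {mpoly K[k]})@_m = if m \in s then f m else 0.
Proof.
elim: s => [|a s IH] /=; first by rewrite big_nil mcoeff0.
case/andP => nas us; rewrite big_cons mcoeffD mcoeffZ mcoeffX IH // in_cons.
case: (eqVneq a m) => [<-|nam]; first by rewrite (negbTE nas) mulr1 addr0.
by rewrite mulr0 add0r.
Qed.

Lemma mcoeff_dmap i p m : (dmap i p)@_m = d i p@_m.
Proof.
rewrite mcoeff_sumX ?msupp_uniq //; case: ifP => //.
by rewrite mcoeff_msupp => /negbFE /eqP ->; rewrite d0.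
Qed.

Lemma msupp_dmap i p : {subset msupp (dmap i p) <= msupp p}.
Proof.
move=> m; rewrite !mcoeff_msupp mcoeff_dmap; apply: contra => /eqP ->.
by rewrite d0.
Qed.

Lemma comm_Mon i m : dd i * Mon m = Mon m * dd i.
Proof.
rewrite /Mon; apply: commr_prod => j _; apply: commrX.
by case: HD => _ Hc _ _ _; rewrite /GRing.comm Hc.
Qed.

Lemma dpol_delta i p : dd i * P p - P p * dd i = P (dmap i p).
Proof.
rewrite (dpolE (msupp_uniq p) (fun x h => h)).
rewrite (dpolE (msupp_uniq p) (@msupp_dmap i p)).
rewrite mulr_sumr mulr_suml -sumrB; apply: eq_bigr => m _.
case: HD => _ _ Hda _ _.
rewrite mulrA Hda mulrDl -!mulrA comm_Mon mcoeff_dmap.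
by rewrite addrAC subrr add0r.
Qed.

Lemma dpolZ c p : P (c *: p) = iota c * P p.
Proof.
rewrite (dpolE (msupp_uniq p) (@msuppZ_le _ _ c p)).
rewrite (dpolE (msupp_uniq p) (fun x h => h)) mulr_sumr.
by apply: eq_bigr => m _; rewrite mcoeffZ rmorphM mulrA.
Qed.

Lemma dpol_inj p : P p = 0 -> p = 0.
Proof. by case: HD => _ _ _ Hi _; apply: Hi. Qed.

Lemma dpol_neq0 p : p != 0 -> P p != 0.
Proof. by apply: contra => /eqP /dpol_inj ->. Qed.

Lemma size_lt_subset (T : eqType) (s1 s2 : seq T) x : uniq s1 ->
  {subset s1 <= s2} -> x \in s2 -> x \notin s1 -> (size s1 < size s2)%N.
Proof.
move=> u1 sub xs2 xn1.
have := @uniq_leq_size _ (x :: s1) s2; rewrite /= xn1 u1; apply => //.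
by move=> y; rewrite in_cons => /orP[/eqP ->|/sub].
Qed.

Variables (Cf : fieldType) (gamma : {rmorphism Cf -> K}).
Hypothesis HC : forall x : K, (forall i, d i x = 0) <-> exists c : Cf, gamma c = x.
Variable phi : {rmorphism {fraction {mpoly Cf[k]}} -> D}.
Hypothesis Hphi_C : forall c : Cf, phi ((c%:MP : {mpoly Cf[k]})%:F) = iota (gamma c).
Hypothesis Hphi_t : forall i : 'I_k, phi (('X_i : {mpoly Cf[k]})%:F) = dd i.

Lemma phiX c m : phi ((c *: 'X_[m] : {mpoly Cf[k]})%:F) = iota (gamma c) * Mon m.
Proof.
rewrite -mul_mpolyC tofracM rmorphM Hphi_C mpolyXE_id /Mon.
rewrite rmorph_prod rmorph_prod; congr (_ * _); apply: eq_bigr => i _.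
by rewrite !rmorphXn Hphi_t.
Qed.

Lemma lift_sum (p : {mpoly K[k]}) (s : seq 'X_{1..k}) :
  (forall m, exists c, gamma c = p@_m) ->
  exists pc : {mpoly Cf[k]}, phi (pc%:F) = \sum_(m <- s) iota p@_m * Mon m.
Proof.
move=> Hc; elim: s => [|m s [pc Hpc]].
  by exists 0; rewrite big_nil tofrac0 rmorph0.
have [c Hcm] := Hc m; exists (c *: 'X_[m] + pc).
by rewrite tofracD rmorphD phiX Hpc big_cons Hcm.
Qed.

Lemma lift (p : {mpoly K[k]}) : (forall i, dmap i p = 0) ->
  exists pc : {mpoly Cf[k]}, phi (pc%:F) = P p.
Proof.
move=> H0; rewrite (dpolE (msupp_uniq p) (fun x h => h)); apply: lift_sum => m.
by apply/HC => i; rewrite -mcoeff_dmap H0 mcoeff0.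
Qed.

Lemma central (z : D) : (forall i, z * dd i = dd i * z) -> exists f, phi f = z.
Proof.
move=> Hz.
have [p0 [q0 [q0n z0]]] : exists p q : {mpoly K[k]},
    q != 0 /\ z = (P q)^-1 * P p by case: HD => _ _ _ _; apply.
have unitP q : q != 0 -> P q \is a GRing.unit.
  by move=> qn; case: HD => Hu _ _ _ _; apply: Hu; apply: dpol_neq0.
pose inI q := exists r, P q * z = P r.
have I0 : inI q0 by exists p0; rewrite z0 mulrA mulrV ?mul1r // unitP.
have IZ c q : inI q -> inI (c *: q).
  by case=> r Hr; exists (c *: r); rewrite !dpolZ -mulrA Hr.
have ID i q : inI q -> inI (dmap i q).
  case=> r Hr; exists (dmap i r); rewrite -!dpol_delta -Hr mulrBl -!mulrA Hz.
  by rewrite !mulrA.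
have claim : forall n q, (size (msupp q) <= n)%N -> q != 0 -> inI q ->
    exists q', [/\ q' != 0, inI q' & forall i, dmap i q' = 0].
  elim=> [|n IH] q.
    by rewrite leqn0 size_eq0 msupp_eq0 => ->.
  move=> sq qn Iq.
  have : msupp q != [::] by rewrite msupp_eq0.
  case Es : (msupp q) => [|m0 s] // _.
  have am0 : q@_m0 != 0 by rewrite -mcoeff_msupp Es mem_head.
  pose q' := (q@_m0)^-1 *: q.
  have q'm0 : q'@_m0 = 1 by rewrite mcoeffZ mulVf.
  have q'n : q' != 0.
    by apply/negP => /eqP h; move: q'm0; rewrite h mcoeff0 => /eqP; rewrite eq_sym oner_eq0.
  have Iq' : inI q' by apply: IZ.
  have sq' : {subset msupp q' <= msupp q} by apply: msuppZ_le.
  case: (boolP [forall i, dmap i q' == 0]) => [/forallP H|].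
    by exists q'; split => // i; apply/eqP.
  rewrite negb_forall => /existsP [i ni].
  have: (size (msupp (dmap i q')) < size (msupp q'))%N.
    apply: (@size_lt_subset _ _ _ m0).
    - exact: msupp_uniq.
    - exact: msupp_dmap.
    - by rewrite mcoeff_msupp q'm0 oner_neq0.
    - by rewrite mcoeff_msupp mcoeff_dmap q'm0 d1 eqxx.
  move=> hlt; apply: (IH (dmap i q')); [|exact: ni|exact: ID].
  have : (size (msupp q') <= size (msupp q))%N.
    by apply: uniq_leq_size; [exact: msupp_uniq|].
  by move=> h; rewrite -ltnS; apply: (leq_trans hlt); apply: (leq_trans h sq).
have [q [qn [r Hr] Hq]] := claim _ q0 (leqnn _) q0n I0.
have Hr0 i : dmap i r = 0.
  apply: dpol_inj; rewrite -dpol_delta -Hr -mulrA Hz !mulrA -mulrBl.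
  by rewrite dpol_delta Hq /dpol_eval msupp0 big_nil mul0r.
have [qc Hqc] := lift Hq.
have [rc Hrc] := lift Hr0.
have qcn : qc%:F != 0.
  apply/negP => /eqP h; move: (dpol_neq0 qn).
  by rewrite -Hqc h rmorph0 eqxx.
exists ((qc%:F)^-1 * rc%:F).
rewrite rmorphM rmorphV ?unitfE // Hqc Hrc -Hr mulrA mulVr ?mul1r //.
exact: unitP.
Qed.

End PartA.

End SubA.
Import SubA.

Module SubB.
Set Implicit Arguments.
Unset Strict Implicit.
Unset Printing Implicit Defensive.

Definition computes (c : prcode) (F : seq nat -> nat) := forall v, preval c v (F v).

Lemma computes_ext c F G : computes c F -> (forall v, F v = G v) -> computes c G.
Proof. by move=> H e v; rewrite -e. Qed.

Fixpoint computes_all (gs : seq prcode) (Gs : seq (seq nat -> nat)) : Prop :=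
  match gs, Gs with
  | [::], [::] => True
  | g :: gs', G :: Gs' => computes g G /\ computes_all gs' Gs'
  | _, _ => False
  end.

Lemma prevals_all gs Gs v : computes_all gs Gs -> prevals gs v (map (fun G => G v) Gs).
Proof.
elim: gs Gs => [|g gs IH] [|G Gs] //= => [_|[Hg Hgs]]; first exact: evs_nil.
by apply: evs_cons => //; apply: IH.
Qed.

Lemma computes_comp f F gs Gs : computes f F -> computes_all gs Gs ->
  computes (PComp f gs) (fun v => F (map (fun G => G v) Gs)).
Proof. by move=> Hf Hg v; apply: ev_comp (prevals_all v Hg) (Hf _). Qed.

Lemma computes_proj i : computes (PProj i) (fun v => nth 0 v i).
Proof. by move=> v; apply: ev_proj. Qed.

Lemma computes_zero : computes PZero (fun _ => 0).
Proof. by move=> v; apply: ev_zero. Qed.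

Fixpoint primrec (F G : seq nat -> nat) (n : nat) (w : seq nat) : nat :=
  if n is n'.+1 then G (n' :: primrec F G n' w :: w) else F w.

Lemma preval_rec f g F G : computes f F -> computes g G ->
  forall n w, preval (PRec f g) (n :: w) (primrec F G n w).
Proof.
move=> Hf Hg; elim=> [|n IH] w /=; first exact: ev_rec0.
exact: ev_recS (IH w) (Hg _).
Qed.

Lemma preval_min f F v n : computes f F -> F (n :: v) = 0 ->
  (forall j, j < n -> 0 < F (j :: v)) -> preval (PMin f) v n.
Proof.
move=> Hf H0 Hj; apply: ev_min; first by rewrite -H0.
by move=> j /Hj h; exists (F (j :: v)); split.
Qed.

Lemma computes_succ g G : computes g G -> computes (PComp PSucc [:: g]) (fun v => (G v).+1).
Proof.
move=> Hg v; apply: ev_comp; first by apply: evs_cons; [exact: Hg|exact: evs_nil].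
exact: ev_succ.
Qed.

Lemma computes_bin f (op : nat -> nat -> nat) a b A B :
  (forall x y, preval f [:: x; y] (op x y)) -> computes a A -> computes b B ->
  computes (PComp f [:: a; b]) (fun v => op (A v) (B v)).
Proof.
move=> Hf Ha Hb v; apply: ev_comp (Hf (A v) (B v)).
by apply: evs_cons => //; apply: evs_cons => //; apply: evs_nil.
Qed.

Lemma computes_un f (op : nat -> nat) a A :
  (forall x, preval f [:: x] (op x)) -> computes a A ->
  computes (PComp f [:: a]) (fun v => op (A v)).
Proof.
move=> Hf Ha v; apply: ev_comp (Hf (A v)).
by apply: evs_cons => //; apply: evs_nil.
Qed.

Lemma preval_rec_eq f g F G n w r : computes f F -> computes g G ->
  primrec F G n w = r -> preval (PRec f g) (n :: w) r.
Proof. by move=> Hf Hg <-; apply: preval_rec. Qed.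

Definition addc := PRec (PProj 0) (PComp PSucc [:: PProj 1]).
Lemma addc_ok x y : preval addc [:: x; y] (x + y).
Proof.
apply: (preval_rec_eq (computes_proj 0) (computes_succ (computes_proj 1))).
by elim: x => //= x ->.
Qed.

Definition mulc := PComp (PRec PZero (PComp addc [:: PProj 1; PProj 2])) [:: PProj 0; PProj 1].
Lemma mulc_ok x y : preval mulc [:: x; y] (x * y).
Proof.
apply: (ev_comp (evs_cons (ev_proj 0 [:: x; y]) (evs_cons (ev_proj 1 [:: x; y]) (evs_nil _)))).
apply: (preval_rec_eq computes_zero (computes_bin addc_ok (computes_proj 1) (computes_proj 2))).
elim: x => //= x ->; by rewrite mulSn addnC.
Qed.

Definition pow2c := PRec (PComp PSucc [:: PZero]) (PComp addc [:: PProj 1; PProj 1]).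
Lemma pow2c_ok x : preval pow2c [:: x] (2 ^ x).
Proof.
apply: (preval_rec_eq (computes_succ computes_zero) (computes_bin addc_ok (computes_proj 1) (computes_proj 1))).
by elim: x => //= x ->; rewrite expnS mul2n addnn.
Qed.

Definition predc := PRec PZero (PProj 0).
Lemma predc_ok x : preval predc [:: x] x.-1.
Proof.
apply: (preval_rec_eq computes_zero (computes_proj 0)).
by case: x.
Qed.

Definition subc := PRec (PProj 0) (PComp predc [:: PProj 1]).
Lemma subc_ok x y : preval subc [:: y; x] (x - y).
Proof.
apply: (preval_rec_eq (computes_proj 0) (computes_un predc_ok (computes_proj 1))).
by elim: y => //= [|y ->]; [rewrite subn0|rewrite subnS].
Qed.

Inductive ex :=
| EV of nat | EC of nat | EAdd of ex & ex | EMul of ex & ex | EPow2 of ex | ESub of ex & ex.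

Fixpoint eval (e : ex) (v : seq nat) : nat :=
  match e with
  | EV j => nth 0 v j
  | EC n => n
  | EAdd a b => eval a v + eval b v
  | EMul a b => eval a v * eval b v
  | EPow2 a => 2 ^ eval a v
  | ESub a b => eval a v - eval b v
  end.

Fixpoint cst (n : nat) : prcode := if n is n'.+1 then PComp PSucc [:: cst n'] else PZero.
Lemma cst_ok n : computes (cst n) (fun _ => n).
Proof. elim: n => [|n IH] /=; [exact: computes_zero|exact: computes_succ]. Qed.

Fixpoint compile (e : ex) : prcode :=
  match e with
  | EV j => PProj j
  | EC n => cst n
  | EAdd a b => PComp addc [:: compile a; compile b]
  | EMul a b => PComp mulc [:: compile a; compile b]
  | EPow2 a => PComp pow2c [:: compile a]
  | ESub a b => PComp subc [:: compile b; compile a]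
  end.

Lemma compile_ok e : computes (compile e) (eval e).
Proof.
elim: e => /= [j|n|a Ha b Hb|a Ha b Hb|a Ha|a Ha b Hb].
- exact: computes_proj.
- exact: cst_ok.
- exact: computes_bin addc_ok Ha Hb.
- exact: computes_bin mulc_ok Ha Hb.
- exact: computes_un pow2c_ok Ha.
- by apply: computes_ext (computes_bin (fun x y => subc_ok y x) Hb Ha) _.
Qed.

Definition EH a b := EMul (EPow2 a) (EAdd (EAdd b b) (EC 1)).
Lemma eval_EH a b v : eval (EH a b) v = 2 ^ eval a v * (eval b v).*2.+1.
Proof. by rewrite /= addnn addn1. Qed.

Definition Ecode (l : seq ex) := foldr EH (EC 0) l.
Lemma eval_Ecode l v : eval (Ecode l) v = CodeSeq.code (map (eval^~ v) l).
Proof. by elim: l => //= a l IH; rewrite -IH addnn addn1. Qed.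

Definition Edist a b := EAdd (ESub a b) (ESub b a).
Lemma eval_Edist a b v : (eval (Edist a b) v == 0) = (eval a v == eval b v).
Proof. by rewrite /= addn_eq0 !subn_eq0 eqn_leq. Qed.

End SubB.
Import SubB.

Module SubP.
Set Implicit Arguments.
Unset Strict Implicit.
Unset Printing Implicit Defensive.
Section Pk.
Variable k : nat.
Local Notation sym := (nat + (nat + 'I_k))%type.
Local Notation cd := CodeSeq.code.
Lemma pickle_term (t : term k) : pickle t = cd (map pickle (GenTree.encode (term_enc t))).
Proof. reflexivity. Qed.
Lemma pickle_sym_inl (j : nat) : pickle (inl j : sym) = cd [:: cd [:: j]; 0].
Proof. reflexivity. Qed.
Lemma pickle_sym_var (n : nat) : pickle (inr (inl n) : sym) = cd [:: 0; cd [:: cd [:: cd [:: n]; 0]]].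
Proof. reflexivity. Qed.
Lemma pickle_sym_cst (i : 'I_k) : pickle (inr (inr i) : sym) = cd [:: 0; cd [:: cd [:: 0; cd [:: pickle i]]]].
Proof. reflexivity. Qed.
Lemma pickle_pair (a b : term k) : pickle (a, b) = cd [:: pickle a; pickle b].
Proof. reflexivity. Qed.
Lemma pickle_seqE (E : seq (term k * term k)) : pickle E = cd (map pickle E).
Proof. reflexivity. Qed.
Lemma pickle_mE (m : nat) (E : seq (term k * term k)) : pickle (m, E) = cd [:: m; pickle E].
Proof. reflexivity. Qed.
End Pk.

End SubP.
Import SubP.

Module SubC.
Set Implicit Arguments.
Unset Strict Implicit.
Unset Printing Implicit Defensive.

Section Prog.
Variable k : nat.
Local Notation cd := CodeSeq.code.

Definition comm (n : nat) (i : 'I_k) : term k * term k :=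
  (TMul (TVar k n) (TCst i), TMul (TCst i) (TVar k n)).

Fixpoint Fn (n : nat) : seq (term k * term k) :=
  if n is n'.+1 then [seq comm n' i | i <- enum 'I_k] ++ Fn n' else [::].

Definition Esv := Ecode [:: EC 0; Ecode [:: Ecode [:: Ecode [:: EV 0]; EC 0]]].
Definition s4 := pickle (inl 4 : nat + (nat + 'I_k)).
Definition s0 := pickle (inl 0 : nat + (nat + 'I_k)).
Definition sc (i : 'I_k) := pickle (inr (inr i) : nat + (nat + 'I_k)).
Definition Ecomm (i : 'I_k) :=
  Ecode [:: Ecode [:: EC s4; Esv; EC (sc i); EC s0];
            Ecode [:: EC s4; EC (sc i); Esv; EC s0]].

Lemma pickle_TMul_vc n i :
  pickle (TMul (TVar k n) (TCst i)) =
  cd [:: s4; pickle (inr (inl n) : nat + (nat + 'I_k)); sc i; s0].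
Proof. reflexivity. Qed.
Lemma pickle_TMul_cv n i :
  pickle (TMul (TCst i) (TVar k n)) =
  cd [:: s4; sc i; pickle (inr (inl n) : nat + (nat + 'I_k)); s0].
Proof. reflexivity. Qed.

Lemma map_nil (T U : Type) (f : T -> U) : map f [::] = [::]. Proof. by []. Qed.
Lemma evalEC n v : eval (EC n) v = n. Proof. by []. Qed.
Lemma evalEV0 n w : eval (EV 0) (n :: w) = n. Proof. by []. Qed.

Lemma eval_Ecomm i n w : eval (Ecomm i) (n :: w) = pickle (comm n i).
Proof.
rewrite /Ecomm /Esv !eval_Ecode !map_cons !map_nil !eval_Ecode !map_cons !map_nil.
do 8 rewrite ?eval_Ecode ?map_cons ?map_nil ?evalEC ?evalEV0.
rewrite pickle_pair pickle_TMul_vc pickle_TMul_cv pickle_sym_var.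
reflexivity.
Qed.


Definition Estep := foldr (fun i acc => EH (Ecomm i) acc) (EV 1) (enum 'I_k).

Lemma code_cat s1 s2 : cd (s1 ++ s2) = foldr (fun x m => 2 ^ x * m.*2.+1) (cd s2) s1.
Proof. by rewrite /CodeSeq.code foldr_cat. Qed.

Lemma eval_Estep n z w :
  eval Estep (n :: z :: w) = foldr (fun x m => 2 ^ x * m.*2.+1) z
     (map pickle [seq comm n i | i <- enum 'I_k]).
Proof.
rewrite /Estep; elim: (enum 'I_k) => [|i l IH]; first by [].
have -> : [seq pickle x | x <- [seq comm n i0 | i0 <- i :: l]] =
  pickle (comm n i) :: [seq pickle x | x <- [seq comm n i0 | i0 <- l]] by [].
have -> : foldr (fun i0 : 'I_k => [eta EH (Ecomm i0)]) (EV 1) (i :: l) =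
  EH (Ecomm i) (foldr (fun i0 : 'I_k => [eta EH (Ecomm i0)]) (EV 1) l) by [].
rewrite eval_EH eval_Ecomm IH; by [].
Qed.

Lemma preval_rec' f g G w b : preval f w b -> computes g G ->
  forall n, preval (PRec f g) (n :: w) (primrec (fun _ => b) G n w).
Proof.
move=> Hf Hg; elim=> [|n IH] /=; first exact: ev_rec0.
exact: ev_recS IH (Hg _).
Qed.

Lemma loop_val (E : seq (term k * term k)) w n :
  primrec (fun _ => pickle E) (eval Estep) n w = pickle (Fn n ++ E).
Proof.
elim: n => [|n IH] //.
rewrite [primrec _ _ _ _]/= eval_Estep IH pickle_seqE -code_cat -map_cat.
by rewrite catA.
Qed.

Definition QFe := Edist (EV 1) (Ecode [:: EC 0; EV 0]).
Definition QGe := EMul (EV 1) (Edist (EV 3) (Ecode [:: EAdd (EV 0) (EC 1); EV 2])).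
Definition TEST := PComp (PRec (compile QFe) (compile QGe)) [:: PProj 1; PProj 0; PProj 1].

Lemma TEST_ok v : preval TEST v
  (primrec (eval QFe) (eval QGe) (nth 0 v 1) [:: nth 0 v 0; nth 0 v 1]).
Proof.
apply: (ev_comp (evs_cons (ev_proj 1 v) (evs_cons (ev_proj 0 v) (evs_cons (ev_proj 1 v) (evs_nil _))))).
exact: preval_rec (compile_ok _) (compile_ok _) _ _.
Qed.

Lemma evalQF b N : (eval QFe [:: b; N] == 0) = (N == cd [:: 0; b]).
Proof.
rewrite /QFe eval_Edist eval_Ecode. by [].
Qed.

Lemma evalQG a z b N : eval QGe [:: a; z; b; N] = z * eval (Edist (EV 3) (Ecode [:: EAdd (EV 0) (EC 1); EV 2])) [:: a; z; b; N].
Proof. by []. Qed.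

Definition Dst := Edist (EV 3) (Ecode [:: EAdd (EV 0) (EC 1); EV 2]).
Lemma evalQG0 a z b N : (eval Dst [:: a; z; b; N] == 0) = (N == cd [:: a.+1; b]).
Proof. by rewrite eval_Edist eval_Ecode /= addn1. Qed.

Lemma primrecS F G a w : primrec F G a.+1 w = G (a :: primrec F G a w :: w).
Proof. by []. Qed.
Lemma primrec0 F G w : primrec F G 0 w = F w.
Proof. by []. Qed.

Lemma search0 a b N j : (j <= a)%N -> cd [:: j; b] = N ->
  primrec (eval QFe) (eval QGe) a [:: b; N] = 0.
Proof.
elim: a => [|a IH].
  by rewrite leqn0 primrec0 => /eqP -> <-; apply/eqP; rewrite evalQF.
rewrite primrecS evalQG leq_eqVlt => /orP [/eqP -> <-|ja Hc].
  by apply/eqP; rewrite muln_eq0 -/Dst evalQG0 eqxx orbT.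
by rewrite IH.
Qed.

Lemma search1 a b N : primrec (eval QFe) (eval QGe) a [:: b; N] = 0 ->
  exists j, cd [:: j; b] = N.
Proof.
elim: a => [|a IH].
  by rewrite primrec0 => /eqP; rewrite evalQF => /eqP ->; exists 0.
rewrite primrecS evalQG => /eqP; rewrite muln_eq0 -/Dst evalQG0 => /orP [/eqP/IH //|/eqP ->].
by exists a.+1.
Qed.

Definition BASE := PMin TEST.
Definition MAIN := PComp (PRec BASE (compile Estep)) [:: PProj 0; PProj 0].

Lemma code_inj2 a b a' b' : cd [:: a; b] = cd [:: a'; b'] -> b = b'.
Proof. by move=> /(congr1 CodeSeq.decode); rewrite !CodeSeq.codeK => -[]. Qed.

Lemma lt_code x s : x \in s -> (x < cd s)%N.
Proof. by move=> xs; have /allP := CodeSeq.ltn_code s; apply. Qed.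

Lemma BASE_ok (m : nat) (E : seq (term k * term k)) :
  preval BASE [:: pickle (m, E)] (pickle E).
Proof.
apply: (preval_min (F := fun v => primrec (eval QFe) (eval QGe) (nth 0 v 1) [:: nth 0 v 0; nth 0 v 1])).
- exact: TEST_ok.
- cbn beta iota delta [nth]; apply: (search0 (j := m)); last by rewrite pickle_mE.
  by rewrite pickle_mE ltnW // lt_code // mem_head.
- move=> j jlt; rewrite lt0n; apply/negP; cbn beta iota delta [nth].
  move=> /eqP /search1 [a]; rewrite pickle_mE => /code_inj2 ej.
  by rewrite ej ltnn in jlt.
Qed.

Lemma MAIN_ok (m : nat) (E : seq (term k * term k)) :
  preval MAIN [:: pickle (m, E)] (pickle (Fn (pickle (m, E)) ++ E)).
Proof.
apply: (ev_comp (evs_cons (ev_proj 0 _) (evs_cons (ev_proj 0 _) (evs_nil _)))).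
rewrite -(loop_val E [:: pickle (m, E)]).
exact: preval_rec' (BASE_ok m E) (compile_ok _) _.
Qed.

End Prog.
End SubC.
Import SubC.

Module SubS.
Set Implicit Arguments.
Unset Strict Implicit.
Unset Printing Implicit Defensive.
Import GRing.Theory.

Section Vars.
Variable k : nat.
Local Notation cd := CodeSeq.code.

Fixpoint tvars (t : term k) : seq nat :=
  match t with
  | TVar n => [:: n]
  | TAdd a b => tvars a ++ tvars b
  | TMul a b => tvars a ++ tvars b
  | _ => [::]
  end.

Lemma teval_vars (R : nzRingType) (c : 'I_k -> R) env env' t :
  (forall v, v \in tvars t -> env v = env' v) -> teval c env t = teval c env' t.
Proof.
elim: t => /= [n|||i|a IHa b IHb|a IHa b IHb] H //.
- by apply: H; rewrite mem_seq1.
- by rewrite IHa ?IHb // => v hv; apply: H; rewrite mem_cat hv ?orbT.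
- by rewrite IHa ?IHb // => v hv; apply: H; rewrite mem_cat hv ?orbT.
Qed.

Lemma teval_morph (R S : nzRingType) (f : {rmorphism R -> S}) (c : 'I_k -> R)
  (c' : 'I_k -> S) env t : (forall i, f (c i) = c' i) ->
  f (teval c env t) = teval c' (fun j => f (env j)) t.
Proof.
move=> Hc; elim: t => /= [n||| i|a IHa b IHb|a IHa b IHb].
- by [].
- exact: rmorph0.
- exact: rmorph1.
- exact: Hc.
- by rewrite rmorphD IHa IHb.
- by rewrite rmorphM IHa IHb.
Qed.

Lemma var_in_encode t v : v \in tvars t ->
  (inr (inl v) : nat + (nat + 'I_k)) \in GenTree.encode (term_enc t).
Proof.
elim: t => /= [n|||i|a IHa b IHb|a IHa b IHb] //.
- rewrite mem_cat => /orP [/IHa h|/IHb h]; rewrite in_cons /= mem_rcons in_cons /=;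
  by rewrite cats0 mem_cat h ?orbT.
- rewrite mem_cat => /orP [/IHa h|/IHb h]; rewrite in_cons /= mem_rcons in_cons /=;
  by rewrite cats0 mem_cat h ?orbT.
Qed.

Lemma var_lt_pickle t v : v \in tvars t -> (v < pickle t)%N.
Proof.
move=> /var_in_encode h.
have l1 : (v < cd [:: v])%N by apply: lt_code; apply: mem_head.
have l2 : (cd [:: v] < cd [:: cd [:: v]; 0])%N by apply: lt_code; apply: mem_head.
have l3 : (cd [:: cd [:: v]; 0] < cd [:: cd [:: cd [:: v]; 0]])%N
  by apply: lt_code; apply: mem_head.
have l4 : (cd [:: cd [:: cd [:: v]; 0]] < cd [:: 0; cd [:: cd [:: cd [:: v]; 0]]])%N.
  by apply: lt_code; rewrite !inE eqxx orbT.
have l5 : (pickle (inr (inl v) : nat + (nat + 'I_k)) < pickle t)%N.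
  by rewrite pickle_term; apply: lt_code; apply: map_f.
rewrite pickle_sym_var in l5.
by apply: (ltn_trans l1 (ltn_trans l2 (ltn_trans l3 (ltn_trans l4 l5)))).
Qed.

Lemma var_lt_N (m : nat) (E : seq (term k * term k)) e v : e \in E ->
  v \in tvars e.1 ++ tvars e.2 -> (v < pickle (m, E))%N.
Proof.
move=> eE; rewrite mem_cat => hv.
have h1 : (v < pickle e)%N.
  case/orP: hv => /var_lt_pickle h; case: e eE h => a b eE h;
  rewrite pickle_pair; apply: (ltn_trans h); apply: lt_code; rewrite !inE eqxx ?orbT //.
have h2 : (pickle e < pickle E)%N by rewrite pickle_seqE; apply: lt_code; apply: map_f.
have h3 : (pickle E < pickle (m, E))%N.
  by rewrite pickle_mE; apply: lt_code; rewrite !inE eqxx orbT.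
exact: ltn_trans h1 (ltn_trans h2 h3).
Qed.

Lemma m_le_N (m : nat) (E : seq (term k * term k)) : (m <= pickle (m, E))%N.
Proof. by rewrite pickle_mE; apply: ltnW; apply: lt_code; apply: mem_head. Qed.

Lemma mem_Fn N e : e \in Fn k N -> exists n i, (n < N)%N /\ e = comm n i.
Proof.
elim: N => [|N IH] //=; rewrite mem_cat => /orP [/mapP [i _ ->]|/IH [n [i [h ->]]]].
  by exists N, i.
by exists n, i; split => //; apply: ltnW.
Qed.

Lemma comm_in_Fn N n i : (n < N)%N -> comm n i \in Fn k N.
Proof.
elim: N => [|N IH] //; rewrite ltnS leq_eqVlt => /orP [/eqP ->|h] /=;
  rewrite mem_cat; apply/orP; [left|right; exact: IH].
by apply: map_f; rewrite mem_enum.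
Qed.

End Vars.

Definition envOf (R : Type) (m : nat) (x : 'I_m -> R) (y : nat -> R) (j : nat) : R :=
  match @insub nat (fun j => j < m)%N 'I_m j with
  | Some i => x i
  | None => y j
  end.

Lemma dioph_satE (R : nzRingType) (k : nat) (c : 'I_k -> R) (m : nat) E x :
  dioph_sat c (m := m) E x <->
  exists y, forall e, e \in E -> teval c (envOf x y) e.1 = teval c (envOf x y) e.2.
Proof. by []. Qed.

Lemma envOf_ord (R : Type) m (x : 'I_m -> R) y (i : 'I_m) : envOf x y i = x i.
Proof. by rewrite /envOf valK. Qed.

Lemma envOf_ge (R : Type) m (x : 'I_m -> R) y j : (m <= j)%N -> envOf x y j = y j.
Proof. by move=> h; rewrite /envOf insubN // -leqNgt. Qed.

Lemma envOf_map (R S : Type) (f : R -> S) m (x : 'I_m -> R) y j :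
  envOf (fun i => f (x i)) (fun j => f (y j)) j = f (envOf x y j).
Proof. by rewrite /envOf; case: insubP. Qed.

Lemma envOf_ext (R : Type) m (x1 x2 : 'I_m -> R) y j :
  (forall i, x1 i = x2 i) -> envOf x1 y j = envOf x2 y j.
Proof. by move=> h; rewrite /envOf; case: insubP. Qed.

Section Core.
Local Open Scope ring_scope.
Variables (k : nat) (K : fieldType) (d : 'I_k -> K -> K).
Hypothesis Hd : commuting_derivations d.
Variables (Cf : fieldType) (gamma : {rmorphism Cf -> K}).
Hypothesis HC : forall x : K, (forall i, d i x = 0) <-> exists c : Cf, gamma c = x.
Variables (D : unitRingType) (iota : {rmorphism K -> D}) (dd : 'I_k -> D).
Hypothesis HD : left_Ore_diff_fractions d iota dd.
Variable phi : {rmorphism {fraction {mpoly Cf[k]}} -> D}.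
Hypothesis Hphi_C : forall c : Cf, phi ((c%:MP : {mpoly Cf[k]})%:F) = iota (gamma c).
Hypothesis Hphi_t : forall i : 'I_k, phi (('X_i : {mpoly Cf[k]})%:F) = dd i.

Let t := fun i : 'I_k => (('X_i : {mpoly Cf[k]})%:F : {fraction {mpoly Cf[k]}}).

Lemma teval_comm (R : nzRingType) (c : 'I_k -> R) env n i :
  (teval c env (comm n i).1 = teval c env (comm n i).2) <->
  (env n * c i = c i * env n).
Proof. by []. Qed.

Lemma core m (E : seq (term k * term k)) N : (m <= N)%N ->
  (forall e v, e \in E -> v \in tvars e.1 ++ tvars e.2 -> (v < N)%N) ->
  forall z, cw_image phi (dioph_sat t (m := m) E) z <-> dioph_sat dd (Fn k N ++ E) z.
Proof.
move=> mN HE z; split.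
  case=> x [/dioph_satE [y Hy] Hz]; apply/dioph_satE.
  have Henv j : envOf z (fun j => phi (y j)) j = phi (envOf x y j).
    rewrite -(envOf_map phi x y); exact: envOf_ext.
  exists (fun j => phi (y j)) => e; rewrite mem_cat => /orP [/mem_Fn [n [i [_ ->]]]|eE].
    by apply/teval_comm; rewrite Henv -Hphi_t -!rmorphM mulrC.
  rewrite (@teval_vars _ _ dd _ (fun j => phi (envOf x y j))) ?Henv //.
  rewrite [in RHS](@teval_vars _ _ dd _ (fun j => phi (envOf x y j))) ?Henv //.
  by rewrite -!(@teval_morph _ _ _ phi t dd _ _ Hphi_t) Hy.
case/dioph_satE => y Hy; set env := envOf z y in Hy.
have Hc j : (j < N)%N -> forall i, env j * dd i = dd i * env j.
  by move=> jN i; apply: (Hy (comm j i)); rewrite mem_cat comm_in_Fn.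
have exW j : exists w, (j < N)%N ==> (phi w == env j).
  case: (boolP (j < N)%N) => [jN|_]; last by exists 0.
  have [w Hw] := central Hd HD HC Hphi_C Hphi_t (Hc j jN).
  by exists w; rewrite Hw eqxx.
pose W j := xchoose (exW j).
have HW j : (j < N)%N -> phi (W j) = env j.
  by move=> jN; have := xchooseP (exW j); rewrite /W; move: (xchoose _) => w; rewrite jN => /eqP.
exists (fun i : 'I_m => W i); split; last first.
  move=> i; rewrite HW; last exact: leq_trans (ltn_ord i) mN.
  by rewrite /env envOf_ord.
apply/dioph_satE; exists W => e eE.
have EW j : envOf (fun i : 'I_m => W i) W j = W j.
  by rewrite /envOf; case: insubP => // i _ <-.
apply: (fmorph_inj phi).
rewrite !(@teval_morph _ _ _ phi t dd _ _ Hphi_t).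
rewrite (@teval_vars _ _ dd _ env); last first.
  by move=> v hv; rewrite EW HW //; apply: (HE e); rewrite // mem_cat hv.
rewrite [in RHS](@teval_vars _ _ dd _ env); last first.
  by move=> v hv; rewrite EW HW //; apply: (HE e); rewrite // mem_cat hv orbT.
by apply: Hy; rewrite mem_cat eE orbT.
Qed.

End Core.

End SubS.
Import SubS.

Import GRing.Theory.
Local Open Scope ring_scope.

Theorem mainTheorem9
  (k : nat) (K : fieldType) (d : 'I_k -> K -> K)
  (Hd : commuting_derivations d)
  (Cf : fieldType) (gamma : {rmorphism Cf -> K})
  (HC : forall x : K, (forall i, d i x = 0) <-> exists c : Cf, gamma c = x)
  (D : unitRingType) (iota : {rmorphism K -> D}) (dd : 'I_k -> D)
  (HD : left_Ore_diff_fractions d iota dd)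
  (phi : {rmorphism {fraction {mpoly Cf[k]}} -> D})
  (Hphi_C : forall c : Cf, phi ((c%:MP : {mpoly Cf[k]})%:F) = iota (gamma c))
  (Hphi_t : forall i : 'I_k, phi (('X_i : {mpoly Cf[k]})%:F) = dd i) :
  let t := fun i : 'I_k => (('X_i : {mpoly Cf[k]})%:F : {fraction {mpoly Cf[k]}}) in
  diophantine_map t dd phi /\ effective_map t dd phi.
Proof.
move=> t.
have Hcore := core Hd HC HD Hphi_C Hphi_t.
split.
  move=> m S [E HE]; exists (Fn k (pickle (m, E)) ++ E) => z.
  rewrite -(Hcore m E (pickle (m, E)) (m_le_N m E)); last first.
    by move=> e v eE hv; apply: (var_lt_N m eE hv).
  split; case=> x [Sx Hz]; exists x; split => //; exact/HE.
exists (MAIN k) => m E; exists (Fn k (pickle (m, E)) ++ E); split.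
  exact: MAIN_ok.
apply: Hcore; first exact: m_le_N.
by move=> e v eE hv; apply: (var_lt_N m eE hv).
Qed.
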